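(* For $\alpha,\alpha'\in\mathbb R/2\pi\mathbb Z$, the maps $\mathbb Z[i]\to\mathbb Z[i]$, $z\mapsto[ze^{i\alpha}]$ and $z\mapsto[ze^{i\alpha'}]$, are equal if and only if $\alpha=\alpha'$.
   Context: Identify $\mathbb Z^2$ with $\mathbb Z[i]$. For real $x$, $[x]=\lfloor x+\tfrac12\rfloor$, and for $w\in\mathbb C$, $[w]=[\Re w]+i[\Im w]$; the map $z\mapsto[ze^{i\alpha}]$ is the discretized rotation of angle $\alpha$. *)

(* Defs.v *)
From Stdlib Require Import Reals ZArith.
Open Scope R_scope.

(* [x] = floor (x + 1/2); Stdlib's Int_part r = up r - 1 is the floor of r. *)
Definition round_half (x : R) : Z := Int_part (x + / 2).

(* Z[i] identified with Z * Z: (a, b) <-> a + i b.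
   (a + i b) e^{i alpha} = (a cos alpha - b sin alpha) + i (a sin alpha + b cos alpha);
   the discretized rotation rounds both coordinates. *)
Definition drot (alpha : R) (z : Z * Z) : Z * Z :=
  let a := IZR (fst z) in
  let b := IZR (snd z) in
  (round_half (a * cos alpha - b * sin alpha),
   round_half (a * sin alpha + b * cos alpha)).

(* Main.v *)
Require Import Defs.
From Stdlib Require Import Reals ZArith Lra.
Open Scope R_scope.

Lemma round_close x y : round_half x = round_half y -> Rabs (x - y) < 1.
Proof.
  unfold round_half. intro H.
  destruct (base_Int_part (x + /2)) as [a1 a2].
  destruct (base_Int_part (y + /2)) as [b1 b2].
  rewrite H in a1, a2. apply Rabs_def1; lra.
Qed.

Lemma eq_of_mul_small d : (forall n : Z, Rabs (IZR n * d) < 1) -> d = 0.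
Proof.
  intro H. destruct (Req_dec d 0) as [|Hd]; auto. exfalso.
  assert (Ha : 0 < Rabs d) by (apply Rabs_pos_lt; auto).
  destruct (archimed (/ Rabs d)) as [h1 _].
  specialize (H (up (/ Rabs d))). rewrite Rabs_mult in H.
  assert (0 < / Rabs d) by (apply Rinv_0_lt_compat; auto).
  rewrite (Rabs_right (IZR _)) in H by lra.
  assert (/ Rabs d * Rabs d = 1) by (field; lra).
  assert (IZR (up (/ Rabs d)) * Rabs d > / Rabs d * Rabs d)
    by (apply Rmult_gt_compat_r; lra).
  lra.
Qed.

Lemma trig2k k : cos (2 * PI * IZR k) = 1 /\ sin (2 * PI * IZR k) = 0.
Proof.
  assert (Hs : sin (IZR k * PI) = 0) by (apply sin_eq_0_1; eauto).
  replace (2 * PI * IZR k) with (2 * (IZR k * PI)) by ring.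
  rewrite cos_2a_sin, sin_2a, Hs. split; ring.
Qed.

Theorem mainTheorem9 (alpha alpha' : R) :
  (forall z : Z * Z, drot alpha z = drot alpha' z) <->
  (exists k : Z, alpha' = alpha + 2 * PI * IZR k).
Proof.
  split.
  - intro H.
    assert (Hc : cos alpha - cos alpha' = 0).
    { apply eq_of_mul_small. intro n. specialize (H (n, 0%Z)).
      unfold drot in H; simpl in H. injection H as H1 H2.
      apply round_close in H1.
      replace (IZR n * (cos alpha - cos alpha')) with
        (IZR n * cos alpha - 0 * sin alpha - (IZR n * cos alpha' - 0 * sin alpha'))
        by ring. exact H1. }
    assert (Hs : sin alpha - sin alpha' = 0).
    { apply eq_of_mul_small. intro n. specialize (H (n, 0%Z)).
      unfold drot in H; simpl in H. injection H as H1 H2.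
      apply round_close in H2.
      replace (IZR n * (sin alpha - sin alpha')) with
        (IZR n * sin alpha + 0 * cos alpha - (IZR n * sin alpha' + 0 * cos alpha'))
        by ring. exact H2. }
    assert (Hcos : cos (alpha' - alpha) = 1).
    { rewrite cos_minus. replace (cos alpha') with (cos alpha) by lra.
      replace (sin alpha') with (sin alpha) by lra.
      pose proof (sin2_cos2 alpha). unfold Rsqr in *. lra. }
    replace (alpha' - alpha) with (2 * ((alpha' - alpha) / 2)) in Hcos by field.
    rewrite cos_2a_sin in Hcos.
    assert (Hz : sin ((alpha' - alpha) / 2) = 0) by nra.
    destruct (sin_eq_0_0 _ Hz) as [k Hk]. exists k. lra.
  - intros [k ->] [a b]. destruct (trig2k k) as [c s].
    unfold drot. rewrite cos_plus, sin_plus, c, s.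
    f_equal; f_equal; ring.
Qed.
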